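(* Consider a graphical economy with resale (as in the context) satisfying Assumptions 2 and 3 stated in the context. Let $(\mathbf{x},\mathbf{y},\mathbf{p})$ be a $\mathbf{b}$-resale quasi-equilibrium, let $i\in[m]$ be a rational agent, and suppose there is a trade path between $i$ and an agent $j\in[m]$. Let $k\in[\ell]$. If either (i) $i$ is non-satiable in $k$, or (ii) $b_i>0$ and $p^i_k>0$, then $p^{\hat j}_k>0$ for all $\hat j\in P(i,j)$.
   Context: Setting. There are goods $[\ell]$ (divisible) and agents $[m]$ that are the nodes of an undirected graph $G=([m],E)$. Write $i\simeq j$ if $i=j$ or $\{i,j\}\in E$, and $i\sim j$ if $i\simeq j$ and $i\ne j$. Agent $i$ has an endowment $\mathbf{e}^i\in\mathbb{R}^\ell_+$, a utility $u_i:\mathbb{R}^\ell_+\to\mathbb{R}_+$, and a resale bound $b_i\ge0$; $\mathbf{b}=(b_i)_i$. Local price vectors $\mathbf{p}^i\in\mathbb{R}^\ell_+$; consumption plans $\mathbf{x}^{ij}$ and resale plans $\mathbf{y}^{ij}$ in $\mathbb{R}^\ell_+$ (what $i$ buys from $j$ to consume / to resell), zero unless $j\simeq i$. A demand system $D:\mathbb{R}_+^{m\times\ell}\times\mathbb{R}_+\to2^{\mathbb{R}_+^{m\times\ell}}$ is normalized if $D(\mathbf{p},0)=\{\mathbf{0}\}$. $C_i(\mathbf{p},\beta)$ = plans $\mathbf{x}^i$ maximizing $u_i(\sum_{j\simeq i}\mathbf{x}^{ij})$ subject to $\sum_{j\simeq i}\mathbf{p}^j\cdot\mathbf{x}^{ij}\le\beta$.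 $R_i(\mathbf{p},b_i)$ = resale plans maximizing $\sum_{j\simeq i}(\mathbf{p}^i-\mathbf{p}^j)\cdot\mathbf{y}^{ij}$ over a feasible set $\mathcal{Y}_i(\mathbf{p},b_i)$. Wealth $\beta_i=\mathbf{p}^i\cdot\mathbf{e}^i+\sum_{j\simeq i}(\mathbf{p}^i-\mathbf{p}^j)\cdot\mathbf{y}^{ij}$. Agent $i$ is rational if $\mathbf{y}^i\in R_i(\mathbf{p},b_i)$ and $\mathbf{x}^i\in C_i(\mathbf{p},\beta_i)$. A $\mathbf{b}$-resale quasi-equilibrium is a triple with $\sum_{i,k}p^i_k=1$, local clearing $\sum_{j\simeq i}\mathbf{x}^{ji}+\sum_{j\simeq i}\mathbf{y}^{ji}=\mathbf{e}^i+\sum_{j\simeq i}\mathbf{y}^{ij}$ and $\mathbf{y}^i\in R_i(\mathbf{p},b_i)$ for all $i$, $\mathbf{x}^i\in C_i(\mathbf{p},\beta_i)$ whenever $\beta_i>0$, and $\sum_{j\simeq i}\mathbf{p}^j\cdot\mathbf{x}^{ij}\le\beta_i$ whenever $\beta_i=0$. Agent $i$ is non-satiable in $k$ if $u_i$ is strictly monotone increasing in coordinate $k$. A trade path between $i$ and $j$ is a path in $G$ from $i$ to $j$ all of whose nodes other than $i,j$ have positive resale bound; $P(i,j)$ is the set of agents on some trade path between $i$ and $j$, including $i$ and $j$. Assumption 2: each $R_i$ is normalized with closed convex feasible set $\mathcal{Y}_i(\mathbf{p},b_i)$, and for each $i$ with $b_i>0$: (i) if some $j\sim i$, $k$ have $0<p^j_k<p^i_k$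 then $\|\mathbf{y}^i\|_1>0$ for all $\mathbf{y}^i\in R_i(\mathbf{p},b_i)$; (ii) if some $j\sim i$, $k$ have $0=p^j_k<p^i_k$ then $R_i(\mathbf{p},b_i)=\emptyset$. Assumption 3: for every agent $i$, $b_i>0$ or all coordinates of $\mathbf{e}^i$ are strictly positive. *)

(* Defs.v *)
From HB Require Import structures.
From mathcomp Require Import all_boot all_order all_algebra.
From mathcomp Require Import all_classical all_reals all_analysis.
Set Implicit Arguments. Unset Strict Implicit. Unset Printing Implicit Defensive.
Import Order.TTheory GRing.Theory Num.Theory numFieldNormedType.Exports.
Local Open Scope ring_scope.
Local Open Scope classical_set_scope.

(* Agents are 'I_m, goods are 'I_l, R : realType.
   A price system is a matrix p : 'M[R]_(m,l) with p i k = p^i_k.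
   A (consumption or resale) plan of agent i is a matrix X : 'M[R]_(m,l)
   with X j k = x^{ij}_k (resp. y^{ij}_k). *)

Section Economy.
Variables (R : realType) (m l : nat).

Definition simeq (adj : rel 'I_m) (i j : 'I_m) : bool := (i == j) || adj i j.
Definition sim (adj : rel 'I_m) (i j : 'I_m) : bool := simeq adj i j && (i != j).

Definition simple_graph (adj : rel 'I_m) : Prop :=
  (forall i j, adj i j = adj j i) /\ (forall i, ~~ adj i i).

Definition nonneg_mx (p : 'M[R]_(m, l)) : Prop := forall i k, 0 <= p i k.

Definition is_plan (adj : rel 'I_m) (i : 'I_m) (X : 'M[R]_(m, l)) : Prop :=
  forall j k, 0 <= X j k /\ (~~ simeq adj i j -> X j k = 0).

Definition bundle (adj : rel 'I_m) (i : 'I_m) (X : 'M[R]_(m, l)) : 'rV[R]_l :=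
  \row_k (\sum_(j | simeq adj i j) X j k).

Definition cost (adj : rel 'I_m) (p : 'M[R]_(m, l)) (i : 'I_m) (X : 'M[R]_(m, l)) : R :=
  \sum_(j | simeq adj i j) \sum_k p j k * X j k.

Definition profit (adj : rel 'I_m) (p : 'M[R]_(m, l)) (i : 'I_m) (Y : 'M[R]_(m, l)) : R :=
  \sum_(j | simeq adj i j) \sum_k (p i k - p j k) * Y j k.

Definition wealth (adj : rel 'I_m) (e p : 'M[R]_(m, l)) (i : 'I_m) (Y : 'M[R]_(m, l)) : R :=
  \sum_k p i k * e i k + profit adj p i Y.

Definition Cdem (adj : rel 'I_m) (u : 'I_m -> 'rV[R]_l -> R)
    (p : 'M[R]_(m, l)) (i : 'I_m) (beta : R) : set 'M[R]_(m, l) :=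
  [set X | [/\ is_plan adj i X, cost adj p i X <= beta &
     forall X', is_plan adj i X' -> cost adj p i X' <= beta ->
       u i (bundle adj i X') <= u i (bundle adj i X)]].

Definition Rdem (adj : rel 'I_m) (Ys : 'I_m -> 'M[R]_(m, l) -> R -> set 'M[R]_(m, l))
    (p : 'M[R]_(m, l)) (i : 'I_m) (b : R) : set 'M[R]_(m, l) :=
  [set Y | [/\ is_plan adj i Y, Ys i p b Y &
     forall Y', is_plan adj i Y' -> Ys i p b Y' -> profit adj p i Y' <= profit adj p i Y]].

Definition l1norm (Y : 'M[R]_(m, l)) : R := \sum_j \sum_k `|Y j k|.

Definition assumption2 (adj : rel 'I_m) (Ys : 'I_m -> 'M[R]_(m, l) -> R -> set 'M[R]_(m, l))
    (b : 'I_m -> R) : Prop :=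
  forall i : 'I_m,
    (forall p, nonneg_mx p -> Rdem adj Ys p i 0 = [set 0]) /\
    (forall p, nonneg_mx p ->
        closed (Ys i p (b i) : set (matrix R m l)) /\ convex_set (Ys i p (b i) : set (convex_lmodType 'M[R]_(m, l)))) /\
    (0 < b i ->
      forall p, nonneg_mx p ->
        (forall j k, sim adj j i -> 0 < p j k -> p j k < p i k ->
           forall Y, Rdem adj Ys p i (b i) Y -> 0 < l1norm Y) /\
        (forall j k, sim adj j i -> 0 = p j k -> p j k < p i k ->
           Rdem adj Ys p i (b i) = set0)).

Definition assumption3 (e : 'M[R]_(m, l)) (b : 'I_m -> R) : Prop :=
  forall i, 0 < b i \/ (forall k, 0 < e i k).

Definition rational_agent (adj : rel 'I_m) (u : 'I_m -> 'rV[R]_l -> R)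
    (Ys : 'I_m -> 'M[R]_(m, l) -> R -> set 'M[R]_(m, l)) (b : 'I_m -> R)
    (e : 'M[R]_(m, l)) (x y : 'I_m -> 'M[R]_(m, l)) (p : 'M[R]_(m, l)) (i : 'I_m) : Prop :=
  Rdem adj Ys p i (b i) (y i) /\ Cdem adj u p i (wealth adj e p i (y i)) (x i).

Definition quasi_equilibrium (adj : rel 'I_m) (u : 'I_m -> 'rV[R]_l -> R)
    (Ys : 'I_m -> 'M[R]_(m, l) -> R -> set 'M[R]_(m, l)) (b : 'I_m -> R)
    (e : 'M[R]_(m, l)) (x y : 'I_m -> 'M[R]_(m, l)) (p : 'M[R]_(m, l)) : Prop :=
  [/\ nonneg_mx p,
      \sum_i \sum_k p i k = 1,
      (forall i, is_plan adj i (x i) /\ is_plan adj i (y i)),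
      (forall i k, \sum_(j | simeq adj i j) x j i k + \sum_(j | simeq adj i j) y j i k
                   = e i k + \sum_(j | simeq adj i j) y i j k) &
      (forall i, [/\ Rdem adj Ys p i (b i) (y i),
                     0 < wealth adj e p i (y i) -> Cdem adj u p i (wealth adj e p i (y i)) (x i) &
                     wealth adj e p i (y i) = 0 -> cost adj p i (x i) <= 0])].

Definition nonsatiable (u : 'I_m -> 'rV[R]_l -> R) (i : 'I_m) (k : 'I_l) : Prop :=
  forall (z : 'rV[R]_l) (d : R), (forall k', 0 <= z 0 k') -> 0 < d ->
    u i z < u i (z + d *: delta_mx 0 k).

(* a trade path between i and j: a (simple) path i = v0, v1, ..., vn = j in G
   whose internal nodes have positive resale bound; given as i :: s *)
Definition trade_path (adj : rel 'I_m) (b : 'I_m -> R) (i j : 'I_m) (s : seq 'I_m) : Prop :=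
  [/\ path adj i s, last i s = j, uniq (i :: s) &
      forall v, v \in take (size s).-1 s -> 0 < b v].

Definition onP (adj : rel 'I_m) (b : 'I_m -> R) (i j v : 'I_m) : Prop :=
  exists s, trade_path adj b i j s /\ v \in i :: s.

End Economy.

(* Main.v *)
Require Import Defs.
From HB Require Import structures.
From mathcomp Require Import all_boot all_order all_algebra.
From mathcomp Require Import all_classical all_reals all_analysis.
Import Order.TTheory GRing.Theory Num.Theory.
Local Open Scope ring_scope.

Lemma keyB (R : realType) (m l : nat) (adj : rel 'I_m) (u : 'I_m -> 'rV[R]_l -> R)
  (p : 'M[R]_(m, l)) (i w : 'I_m) (k : 'I_l) beta X :
  nonsatiable u i k -> Cdem adj u p i beta X -> simeq adj i w -> p w k = 0 -> False.
Proof.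
move=> Hns [Hplan Hcost Hopt] Hiw Hp.
pose X' := X + delta_mx w k.
have plan' : is_plan adj i X'.
  move=> j0 k0; rewrite !mxE; have [h1 h2] := Hplan j0 k0; split.
    by apply: addr_ge0 => //; apply: ler0n.
  move=> nj; rewrite h2 //.
  have -> : (j0 == w) = false by apply/negbTE; apply: contra nj => /eqP->.
  by rewrite /= add0r.
have cost' : cost adj p i X' = cost adj p i X.
  rewrite /cost; apply: eq_bigr => j0 _; apply: eq_bigr => k0 _.
  rewrite !mxE mulrDr.
  have -> : p j0 k0 * ((j0 == w) && (k0 == k))%:R = 0.
    by case: eqP => [->|_]; case: eqP => [->|_] //=; rewrite ?Hp ?mul0r ?mulr0.
  by rewrite addr0.
have bund : bundle adj i X' = bundle adj i X + 1 *: delta_mx 0 k.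
  apply/matrixP => a c; rewrite ord1 !mxE /X'; under eq_bigr do rewrite mxE; rewrite big_split /=; congr (_ + _).
  rewrite mul1r (bigD1 w) //= big1 ?addr0; first by rewrite mxE eqxx.
  by move=> j0 /andP[_ /negbTE]; rewrite mxE => ->.
have := Hopt X' plan'; rewrite cost' => /(_ Hcost); rewrite bund.
apply/negP; rewrite -ltNge; apply: Hns => //.
move=> k'; rewrite mxE; apply: sumr_ge0 => j0 _; exact: (Hplan j0 k').1.
Qed.

Lemma keyA (R : realType) (m l : nat) (adj : rel 'I_m) (u : 'I_m -> 'rV[R]_l -> R)
    (e : 'M[R]_(m, l)) (b : 'I_m -> R) (Ys : 'I_m -> 'M[R]_(m, l) -> R -> set 'M[R]_(m, l))
    (x y : 'I_m -> 'M[R]_(m, l)) (p : 'M[R]_(m, l)) (v w : 'I_m) (k : 'I_l) :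
  simple_graph adj -> assumption2 adj Ys b -> quasi_equilibrium adj u Ys b e x y p ->
  0 < b v -> 0 < p v k -> adj v w -> 0 < p w k.
Proof.
move=> [Hsym Hirr] HA2 [Hnn _ _ _ HR] Hb Hp Hvw.
rewrite lt_def Hnn andbT; apply/negP => /eqP Hw.
have [_ [_ /(_ Hb p Hnn) [_ H2]]] := HA2 v.
have Hsim : sim adj w v.
  rewrite /sim /simeq Hsym Hvw orbT /=.
  by apply/negP => /eqP Hwv; move: (Hirr v) Hvw; rewrite Hwv => /negP.
have := H2 w k Hsim (esym Hw); rewrite Hw => /(_ Hp) HE.
have [HRv _ _] := HR v.
by move: HRv; rewrite HE.
Qed.

Lemma propag (R : realType) (m l : nat) (adj : rel 'I_m) (u : 'I_m -> 'rV[R]_l -> R)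
    (e : 'M[R]_(m, l)) (b : 'I_m -> R) (Ys : 'I_m -> 'M[R]_(m, l) -> R -> set 'M[R]_(m, l))
    (x y : 'I_m -> 'M[R]_(m, l)) (p : 'M[R]_(m, l)) (k : 'I_l) :
  simple_graph adj -> assumption2 adj Ys b -> quasi_equilibrium adj u Ys b e x y p ->
  forall s v, path adj v s -> (forall w, w \in take (size s).-1 s -> 0 < b w) ->
  0 < p v k -> (forall w, adj v w -> 0 < p w k) ->
  forall z, z \in v :: s -> 0 < p z k.
Proof.
move=> Hg HA2 HQ; elim=> [|w s IH] v.
  by move=> _ _ Hp _ z; rewrite inE => /eqP ->.
move=> /= /andP[Hvw Hpath] Hint Hp Hnb z.
rewrite inE => /orP[/eqP -> //|Hz].
have Hpw := Hnb w Hvw.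
case: s IH Hpath Hint Hz => [|w' s] IH Hpath Hint Hz.
  by move: Hz; rewrite inE => /eqP ->.
have Hbw : 0 < b w by apply: Hint; rewrite /= inE eqxx.
apply: (IH w) Hz => //.
- move=> w0 Hw0; apply: Hint => /=; rewrite inE; apply/orP; right.
  move: Hw0; rewrite /=; exact.
- move=> w0; exact: keyA Hg HA2 HQ Hbw Hpw.
Qed.

Theorem lemmaA1 (R : realType) (m l : nat) (adj : rel 'I_m)
    (e : 'M[R]_(m, l)) (u : 'I_m -> 'rV[R]_l -> R)
    (b : 'I_m -> R) (Ys : 'I_m -> 'M[R]_(m, l) -> R -> set 'M[R]_(m, l))
    (x y : 'I_m -> 'M[R]_(m, l)) (p : 'M[R]_(m, l)) (i j : 'I_m) (k : 'I_l) :
  simple_graph adj ->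
  nonneg_mx e ->
  (forall a (z : 'rV[R]_l), (forall k', 0 <= z 0 k') -> 0 <= u a z) ->
  (forall a, 0 <= b a) ->
  assumption2 adj Ys b ->
  assumption3 e b ->
  quasi_equilibrium adj u Ys b e x y p ->
  rational_agent adj u Ys b e x y p i ->
  (exists s, trade_path adj b i j s) ->
  nonsatiable u i k \/ (0 < b i /\ 0 < p i k) ->
  forall jh, onP adj b i j jh -> 0 < p jh k.
Proof.
move=> Hg _ _ _ HA2 _ HQ [_ HC] _ Hcase jh [s [[Hpath _ _ Hint] Hjh]].
have Hnn : nonneg_mx p by case: HQ.
have pos_of_ns : nonsatiable u i k -> forall w, simeq adj i w -> 0 < p w k.
  move=> Hns w Hw; rewrite lt_def Hnn andbT; apply/negP => /eqP Hpw.
  exact: keyB Hns HC Hw Hpw.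
have [Hpi Hnb] : 0 < p i k /\ (forall w, adj i w -> 0 < p w k).
  case: Hcase => [Hns|[Hb Hp]].
    split; first by apply: (pos_of_ns Hns i); rewrite /simeq eqxx.
    by move=> w Hw; apply: (pos_of_ns Hns w); rewrite /simeq Hw orbT.
  by split=> // w; exact: keyA Hg HA2 HQ Hb Hp.
have H1 := @propag R m l adj u e b Ys x y p k Hg HA2 HQ s i Hpath.
exact: (H1 Hint Hpi Hnb jh Hjh).
Qed.
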